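(* Let $f_A(x)=1-\dfrac{1}{\sum_{n\ge0}n!\,x^n}$. For all $n\ge1$ and $k\ge0$, the number of permutations $w\in\mathfrak S_n$ with $|C(w)|=k$ equals the coefficient of $x^nt^k$ in $\dfrac{f_A(x)}{1-t\,f_A(x)}$.
   Context: $\mathfrak S_n$ is the Coxeter group with generators $\tau_i=(i,i+1)$, $1\le i\le n-1$. For $w\in\mathfrak S_n$, $C(w)$ is the set of $\tau_i$ that do not appear in a (any) reduced expression of $w$; equivalently $C(w)=\{\tau_i: w(j)<w(k)\text{ for all }1\le j\le i<k\le n\}$. Generating functions are formal power series. *)

(* Defs.v *)
From HB Require Import structures.
From mathcomp Require Import all_boot all_order all_algebra all_fingroup.
Set Implicit Arguments. Unset Strict Implicit. Unset Printing Implicit Defensive.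
Import Order.TTheory GRing.Theory Num.Theory.
Local Open Scope ring_scope.

Definition fps (R : Type) := nat -> R.

Section FPS.
Variable R : unitRingType.

Definition fps_one : fps R := fun n => (n == 0%N)%:R.
Definition fps_sub (f g : fps R) : fps R := fun n => f n - g n.
Definition fps_mul (f g : fps R) : fps R :=
  fun n => \sum_(i < n.+1) f i * g (n - i)%N.

(* first n+1 coefficients of the inverse of f (f 0 assumed invertible):
   g_0 = (f_0)^-1,  g_m = - (f_0)^-1 * sum_{i=1}^m f_i g_{m-i}. *)
Fixpoint fps_inv_seq (f : fps R) (n : nat) : seq R :=
  match n with
  | 0%N => [:: (f 0%N)^-1]
  | m.+1 => let s := fps_inv_seq f m in
            rcons s (- (f 0%N)^-1 *
                     \sum_(i < m.+1) f i.+1 * nth 0 s (m - i)%N)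
  end.

Definition fps_inv (f : fps R) : fps R := fun n => nth 0 (fps_inv_seq f n) n.
End FPS.

(** Bivariate series in x and t, as series in t whose coefficients are
    series in x: (B k) n = coefficient of x^n t^k. *)
Definition bfps := nat -> fps rat.

Definition bfps_mul (F G : bfps) : bfps :=
  fun k n => \sum_(j < k.+1) fps_mul (F j) (G (k - j)%N) n.

Fixpoint bfps_inv_seq (F : bfps) (k : nat) : seq (fps rat) :=
  match k with
  | 0%N => [:: fps_inv (F 0%N)]
  | m.+1 => let s := bfps_inv_seq F m in
            rcons s (fps_mul (fps_inv (F 0%N))
                      (fun n => - \sum_(i < m.+1)
                         fps_mul (F i.+1) (nth (fun _ => 0) s (m - i)%N) n))
  end.

Definition bfps_inv (F : bfps) : bfps :=
  fun k => nth (fun _ => 0) (bfps_inv_seq F k) k.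

Definition bconst (f : fps rat) : bfps := fun k => if k == 0%N then f else (fun _ => 0).

Definition factorial_series : fps rat := fun n => (n`!)%:R.

Definition fA : fps rat := fps_sub (fps_one rat) (fps_inv factorial_series).

Definition one_minus_t_fA : bfps :=
  fun k => if k == 0%N then fps_one rat
           else if k == 1%N then fps_sub (fun _ => 0) fA else (fun _ => 0).

Definition gen_fun : bfps := bfps_mul (bconst fA) (bfps_inv one_minus_t_fA).

(** C(w): with positions 0-indexed (position p <-> p+1), the generator
    tau_i (1 <= i <= n-1) is identified with i : 'I_n, i > 0, and
    tau_i \in C(w) iff w(j) < w(k) for all j <= i < k (1-indexed),
    i.e. w p < w q for all 0-indexed p < i <= q. *)
Definition Cset (n : nat) (w : 'S_n) : {set 'I_n} :=
  [set i : 'I_n | (0 < i)%N &&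
     [forall p : 'I_n, forall q : 'I_n,
        ((p < i)%N && (i <= q)%N) ==> (w p < w q)%N]].

(* Main.v *)
Require Import Defs.
From HB Require Import structures.
From mathcomp Require Import all_boot all_order all_algebra all_fingroup.
From mathcomp Require Import zify.
Set Implicit Arguments. Unset Strict Implicit. Unset Printing Implicit Defensive.

Section Dsum.
Variables i m : nat.

Definition dsum_fun (u : 'S_i) (v : 'S_m) (x : 'I_(i+m)) : 'I_(i+m) :=
  match split x with inl a => lshift m (u a) | inr b => rshift i (v b) end.

Lemma split_l (a : 'I_i) : split (lshift m a) = inl a.
Proof. exact: (unsplitK (inl a : 'I_i + 'I_m)). Qed.
Lemma split_r (b : 'I_m) : split (rshift i b) = inr b.
Proof. exact: (unsplitK (inr b : 'I_i + 'I_m)). Qed.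

Lemma dsum_inj u v : injective (dsum_fun u v).
Proof.
move=> x y; rewrite /dsum_fun -[x]splitK -[y]splitK.
case: (split x) => [a|b]; case: (split y) => [a'|b'] /=;
  rewrite ?split_l ?split_r => E.
- by rewrite (perm_inj (lshift_inj E)).
- by move/(congr1 val): E => /=; have := ltn_ord (u a); lia.
- by move/(congr1 val): E => /=; have := ltn_ord (u a'); lia.
- by rewrite (perm_inj (rshift_inj E)).
Qed.

Definition dsum u v : 'S_(i+m) := perm (@dsum_inj u v).

Lemma dsum_l u v a : dsum u v (lshift m a) = lshift m (u a).
Proof. by rewrite permE /dsum_fun split_l. Qed.
Lemma dsum_r u v b : dsum u v (rshift i b) = rshift i (v b).
Proof. by rewrite permE /dsum_fun split_r. Qed.

Lemma dsum_injective : injective (fun uv : 'S_i * 'S_m => dsum uv.1 uv.2).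
Proof.
move=> [u v] [u' v'] /= E; congr pair; apply/permP => x.
- by apply: (@lshift_inj _ m); rewrite -(dsum_l u v) -(dsum_l u' v') E.
- by apply: (@rshift_inj i); rewrite -(dsum_r u v) -(dsum_r u' v') E.
Qed.

Lemma Cset_lshift u v (a : 'I_i) : (lshift m a \in Cset (dsum u v)) = (a \in Cset u).
Proof.
rewrite !inE /=; congr andb.
apply/forallP/forallP => H p; apply/forallP => q; apply/implyP => /andP [h1 h2].
- have := forallP (H (lshift m p)) (lshift m q).
  by rewrite !dsum_l => /implyP; apply; apply/andP.
- move: h1 h2; rewrite -[p]splitK -[q]splitK.
  case: (split p) => [p'|p']; case: (split q) => [q'|q'] /= h1 h2;
    rewrite ?dsum_l ?dsum_r /=.
  + by have := forallP (H p') q'; rewrite h1 h2.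
  + by have := ltn_ord (u p'); lia.
  + by have := ltn_ord a; lia.
  + by have := ltn_ord a; lia.
Qed.

Lemma Cset_rshift u v (b : 'I_m) :
  (rshift i b \in Cset (dsum u v)) = if val b == 0 then 0 < i else b \in Cset v.
Proof.
rewrite !inE /=.
case: eqP => [b0|bn0].
- apply/andP/idP => [[h _]|hi]; first by lia.
  split; first by lia.
  apply/forallP => p; apply/forallP => q; apply/implyP => /andP [].
  rewrite -[p]splitK -[q]splitK b0.
  case: (split p) => [p'|p']; case: (split q) => [q'|q'] /= h1 h2;
    rewrite ?dsum_l ?dsum_r /=.
  + by have := ltn_ord q'; lia.
  + by have := ltn_ord (u p'); lia.
  + lia.
  + lia.
- have -> : (0 < i + b) = true by lia.
  have -> : (0 < b) = true by lia.
  rewrite /=.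
  apply/forallP/forallP => H p; apply/forallP => q; apply/implyP => /andP [h1 h2].
  + have := forallP (H (rshift i p)) (rshift i q).
    rewrite !dsum_r /= => /implyP X.
    have : i + v p < i + v q by apply: X; apply/andP; lia.
    lia.
  + move: h1 h2; rewrite -[p]splitK -[q]splitK.
    case: (split p) => [p'|p']; case: (split q) => [q'|q'] /= h1 h2;
      rewrite ?dsum_l ?dsum_r /=.
    * by have := ltn_ord q'; lia.
    * by have := ltn_ord (u p'); lia.
    * by have := ltn_ord q'; lia.
    * have := forallP (H p') q'.
      have -> : (p' < b <= q') = true by apply/andP; lia.
      move=> /= ?; lia.
Qed.

End Dsum.

Lemma decomp i m (w : 'S_(i+m)) :
  (forall p q : 'I_(i+m), p < i <= q -> w p < w q) -> exists u v, w = dsum u v.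
Proof.
move=> H.
have HL : forall a : 'I_i, w (lshift m a) < i.
  move=> a; rewrite ltnNge; apply/negP => hge.
  set s1 := [seq val (w (rshift i b)) | b <- enum 'I_m].
  have U : uniq s1.
    rewrite map_inj_uniq ?enum_uniq // => b1 b2 /val_inj/perm_inj/rshift_inj //.
  have S : {subset s1 <= iota (w (lshift m a)).+1 (i + m - (w (lshift m a)).+1)}.
    move=> y /mapP [b _ ->]; rewrite mem_iota.
    have := H (lshift m a) (rshift i b); rewrite /=.
    have := ltn_ord a; have := ltn_ord (w (rshift i b)) => h1 h2 h3.
    have {}h3 := h3 (ltac:(apply/andP; lia)).
    apply/andP; lia.
  have := uniq_leq_size U S; rewrite size_map size_enum_ord size_iota.
  have := ltn_ord (w (lshift m a)); lia.
have HR : forall b : 'I_m, i <= w (rshift i b).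
  move=> b; rewrite leqNgt; apply/negP => hlt.
  set s1 := [seq val (w (lshift m a)) | a <- enum 'I_i].
  have U : uniq s1.
    rewrite map_inj_uniq ?enum_uniq // => b1 b2 /val_inj/perm_inj/lshift_inj //.
  have S : {subset s1 <= iota 0 (w (rshift i b))}.
    move=> y /mapP [a _ ->]; rewrite mem_iota /=.
    by apply: H; rewrite /= (ltn_ord a) leq_addr.
  have := uniq_leq_size U S; rewrite size_map size_enum_ord size_iota.
  lia.
have HR' : forall b : 'I_m, w (rshift i b) - i < m.
  move=> b; have := ltn_ord (w (rshift i b)); have := HR b; lia.
have uinj : injective (fun a => Ordinal (HL a)).
  by move=> a1 a2 [] /val_inj/perm_inj/lshift_inj.
have vinj : injective (fun b => Ordinal (HR' b)).
  move=> b1 b2 [] E; apply/rshift_inj/(@perm_inj _ w)/val_inj => /=.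
  by have := HR b1; have := HR b2; lia.
exists (perm uinj), (perm vinj).
apply/permP => x; rewrite -[x]splitK; case: (split x) => [a|b] /=.
- by rewrite dsum_l permE; apply: val_inj.
- rewrite dsum_r permE; apply: val_inj => /=; have := HR b; lia.
Qed.

Definition iscut n (w : 'S_n) (j : nat) : bool :=
  [exists x : 'I_n, (x \in Cset w) && (val x == j)].
Definition fc n (w : 'S_n) : nat := find (iscut w) (iota 0 n).
Definition Gc n (R : pred nat) := #|[set w : 'S_n | R #|Cset w|]|.
Definition cc n k := Gc n (fun x => x == k).

Lemma fc_le n (w : 'S_n) : fc w <= n.
Proof. by have := find_size (iscut w) (iota 0 n); rewrite size_iota. Qed.

Lemma fc_eq n (w : 'S_n) j : j < n ->
  (fc w == j) = iscut w j && [forall l : 'I_j, ~~ iscut w l].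
Proof.
move=> jn.
have nthi : forall l, l < n -> nth 0 (iota 0 n) l = l.
  by move=> l ln; rewrite nth_iota.
apply/eqP/andP => [E|[h1 h2]].
- have hf : has (iscut w) (iota 0 n) by rewrite has_find size_iota -/(fc w) E.
  split.
  + by have := nth_find 0 hf; rewrite -/(fc w) nthi E.
  + apply/forallP => l; have := @before_find _ 0 (iscut w) (iota 0 n) l.
    rewrite -/(fc w) E (ltn_ord l) nthi => [->//|]; have := ltn_ord l; lia.
- have [lt|gt|//] := ltngtP (fc w) j.
  + have hf : has (iscut w) (iota 0 n) by rewrite has_find size_iota -/(fc w); lia.
    have := nth_find 0 hf; rewrite -/(fc w) nthi; last by lia.
    by have := forallP h2 (Ordinal lt) => /= /negbTE ->.
  + by have := @before_find _ 0 (iscut w) (iota 0 n) j gt; rewrite nthi // h1.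
Qed.

Lemma fc_n n (w : 'S_n) : (fc w == n) = (Cset w == set0).
Proof.
apply/eqP/eqP => [E|E].
- apply/setP => x; rewrite in_set0; apply/negP => hx.
  have : has (iscut w) (iota 0 n).
    apply/hasP; exists (val x); first by rewrite mem_iota /=.
    by apply/existsP; exists x; rewrite hx eqxx.
  by rewrite has_find size_iota -/(fc w) E ltnn.
- have : ~~ has (iscut w) (iota 0 n).
    apply/hasPn => l _; apply/existsP => [[x /andP [hx _]]].
    by rewrite E inE in hx.
  rewrite has_find size_iota -/(fc w) -leqNgt => h.
  by apply/eqP; rewrite eqn_leq h fc_le.
Qed.

Lemma fc_0 n (w : 'S_n) : 0 < n -> (fc w == 0) = false.
Proof.
move=> n0; rewrite fc_eq //; apply/negbTE; apply/nandP; left.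
apply/existsP => [[x /andP []]]; rewrite inE => /andP [hx _] /eqP h.
by rewrite h in hx.
Qed.

Lemma iscut_l i m u v (a : 'I_i) : iscut (dsum u v : 'S_(i+m)) a = (a \in Cset u).
Proof.
apply/existsP/idP => [[x /andP [hx /eqP ex]]|h].
- move: hx ex; rewrite -[x]splitK; case: (split x) => [a'|b] /=.
  + by rewrite Cset_lshift => h e; rewrite -(val_inj e).
  + by move=> _ e; have := ltn_ord a; lia.
- by exists (lshift m a); rewrite Cset_lshift h eqxx.
Qed.

Lemma iscut_i i m (u : 'S_i) (v : 'S_m) : 0 < i -> 0 < m -> iscut (dsum u v) i.
Proof.
move=> i0 m0; apply/existsP; exists (rshift i (Ordinal m0)).
by rewrite Cset_rshift /= i0 addn0 eqxx.
Qed.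

Lemma card_Cset_dsum i m (u : 'S_i) (v : 'S_m) : 0 < i -> 0 < m -> Cset u = set0 ->
  #|Cset (dsum u v)| = #|Cset v|.+1.
Proof.
move=> i0 m0 cu.
rewrite -!sum1_card big_mkcond big_split_ord /=.
rewrite big1 ?add0n; last by move=> a _; rewrite Cset_lshift cu inE.
case: m m0 v => // m' _ v.
rewrite big_ord_recl Cset_rshift /= i0 add1n; congr S.
rewrite [RHS]big_mkcond big_ord_recl /=.
have -> : (ord0 \in Cset v) = false by rewrite inE.
rewrite add0n; apply: eq_bigr => b _; rewrite Cset_rshift /=.
by [].
Qed.

Lemma core i m (R : pred nat) : 0 < i -> 0 < m ->
  #|[set w : 'S_(i+m) | (fc w == i) && R #|Cset w|]| = cc i 0 * Gc m (fun x => R x.+1).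
Proof.
move=> i0 m0.
have cu0 : forall u : 'S_i, #|Cset u| == 0 -> Cset u = set0 by move=> u /eqP/cards0_eq.
have -> : [set w : 'S_(i+m) | (fc w == i) && R #|Cset w|] =
  (fun uv : 'S_i * 'S_m => dsum uv.1 uv.2) @:
     setX [set u : 'S_i | #|Cset u| == 0] [set v : 'S_m | R #|Cset v|.+1].
  apply/setP => w; rewrite inE; apply/andP/imsetP.
  - move=> [hf hR]; rewrite fc_eq in hf; last by lia.
    move/andP: hf => [/existsP [x /andP [hx /eqP ex]] hl].
    have [u [v ew]] : exists u v, w = dsum u v.
      apply: decomp => p q hpq; move: hx; rewrite inE => /andP [_ /forallP H].
      by have := forallP (H p) q; rewrite ex hpq.
    subst w.
    have cu : Cset u = set0.
      apply/setP => a; rewrite in_set0; apply/negbTE.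
      by have := forallP hl a; rewrite iscut_l.
    exists (u, v); last by [].
    by rewrite inE /= !inE cu cards0 -(card_Cset_dsum v i0 m0 cu) hR.
  - move=> [[u v]]; rewrite inE /= !inE => /andP [hu hv] ->.
    have cu := cu0 u hu.
    split; last by rewrite card_Cset_dsum.
    rewrite fc_eq; last by lia.
    rewrite iscut_i //=; apply/forallP => l.
    by rewrite iscut_l cu in_set0.
by rewrite card_imset ?cardsX //; exact: dsum_injective.
Qed.

Lemma partition_count n (R : pred nat) :
  Gc n R = \sum_(j < n.+1) #|[set w : 'S_n | (fc w == j) && R #|Cset w|]|.
Proof.
rewrite /Gc -sum1_card (partition_big (fun w => inord (fc w) : 'I_n.+1) xpredT) //=.
apply: eq_bigr => j _; rewrite -sum1_card; apply: eq_bigl => w.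
rewrite !inE andbC; congr andb.
by rewrite -(inj_eq val_inj) /= inordK // ltnS fc_le.
Qed.

Lemma Gc_rec n (R : pred nat) : 0 < n ->
  Gc n R = \sum_(j < n.+1)
     (if val j == 0 then 0 else if val j < n then cc j 0 * Gc (n - j) (fun x => R x.+1)
      else R 0 * cc n 0).
Proof.
move=> n0; rewrite partition_count; apply: eq_bigr => j _.
case: eqP => [j0|jn0].
  apply/eqP; rewrite cards_eq0; apply/eqP/setP => w; rewrite !inE j0 fc_0 //.
case: ifP => jn.
  move: jn jn0; change (val j) with (nat_of_ord j); move: (nat_of_ord j) => jj jn jn0.
  have [m e] : exists m, n = jj + m by exists (n - jj); rewrite subnKC // ltnW.
  subst n; rewrite addKn core //; first by rewrite lt0n; apply/eqP.
  lia.
have ej : val j = n by apply/eqP; rewrite eqn_leq -ltnS ltn_ord leqNgt jn.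
rewrite ej.
have -> : [set w : 'S_n | (fc w == n) && R #|Cset w|] =
          [set w : 'S_n | R 0 && (#|Cset w| == 0)].
  apply/setP => w; rewrite !inE fc_n andbC -cards_eq0.
  by case: (#|Cset w| =P 0) => [->|]; rewrite ?andbF ?andbT.
case: (R 0) => /=; last by rewrite mul0n; apply/eqP; rewrite cards_eq0; apply/eqP/setP => w; rewrite !inE.
by rewrite mul1n.
Qed.

Lemma GcT n : Gc n (fun _ => true) = n`!.
Proof.
rewrite /Gc; have -> : [set w : 'S_n | true] = setT by apply/setP => w; rewrite !inE.
by rewrite cardsT card_Sn.
Qed.

Lemma fact_rec n : 0 < n -> n`! = \sum_(i < n) cc i.+1 0 * (n - i.+1)`!.
Proof.
move=> n0.
rewrite -GcT Gc_rec // big_ord_recl /= add0n; apply: eq_bigr => i _.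
rewrite /bump leq0n add1n GcT.
case: ifP => // h.
have e : i.+1 = n by have := ltn_ord i; move/negbT: h; rewrite -leqNgt; lia.
by rewrite e subnn fact0 muln1 mul1n.
Qed.

Import GRing.Theory.
Local Open Scope ring_scope.

Lemma size_inv_seq (f : fps rat) m : size (fps_inv_seq f m) = m.+1.
Proof. by elim: m => //= m IH; rewrite size_rcons IH. Qed.

Lemma nth_inv_seq (f : fps rat) m j : (j <= m)%N -> nth 0 (fps_inv_seq f m) j = fps_inv f j.
Proof.
rewrite /fps_inv; elim: m => [|m IH]; first by rewrite leqn0 => /eqP ->.
rewrite leq_eqVlt => /orP [/eqP ->//|h].
by rewrite /= nth_rcons size_inv_seq h IH.
Qed.

Lemma inv_unique (f g : fps rat) : f 0%N = 1 -> g 0%N = 1 ->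
  (forall n, (0 < n)%N -> \sum_(i < n.+1) f i * g (n - i)%N = 0) ->
  forall n, fps_inv f n = g n.
Proof.
move=> f0 g0 H n; elim/ltn_ind: n => n IH.
case: n IH => [|n] IH; first by rewrite /fps_inv /= f0 invr1 g0.
rewrite /fps_inv /= nth_rcons size_inv_seq ltnn eqxx f0 invr1 mulN1r.
have := H n.+1 isT; rewrite big_ord_recl f0 mul1r subn0 => /eqP.
rewrite addr_eq0 => /eqP ->; congr (- _); apply: eq_bigr => i _.
rewrite lift0 subSS nth_inv_seq ?leq_subr // IH // ltnS leq_subr //.
Qed.

Lemma fps_mul_ext (f f' g g' : fps rat) n : (forall i, f i = f' i) -> (forall i, g i = g' i) ->
  fps_mul f g n = fps_mul f' g' n.
Proof. by move=> hf hg; apply: eq_bigr => i _; rewrite hf hg. Qed.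

Lemma fps_mul1 (g : fps rat) n : fps_mul (fps_one rat) g n = g n.
Proof.
rewrite /fps_mul big_ord_recl /= mul1r subn0 big1 ?addr0 // => i _.
by rewrite /fps_one /bump leq0n add1n /= mul0r.
Qed.

Lemma fps_mulr1 (g : fps rat) n : fps_mul g (fps_one rat) n = g n.
Proof.
rewrite /fps_mul big_ord_recr /= subnn mulr1 big1 ?add0r // => i _.
have h : (n - i == 0)%N = false by rewrite subn_eq0 leqNgt ltn_ord.
by rewrite /fps_one /= h mulr0.
Qed.

Lemma fps_mul0 (g : fps rat) n : fps_mul (fun _ => 0) g n = 0.
Proof. by rewrite /fps_mul big1 // => i _; rewrite mul0r. Qed.

Lemma sum_rev (F : nat -> nat -> rat) n :
  \sum_(i < n.+1) F i (n - i)%N = \sum_(i < n.+1) F (n - i)%N i.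
Proof.
rewrite (reindex_inj rev_ord_inj) /=; apply: eq_bigr => i _.
by rewrite subSS subKn // -ltnS.
Qed.

Definition Gbar (m : nat) : rat := if m == 0%N then 1 else - (cc m 0)%:R.
Definition aa (m : nat) : rat := if m == 0%N then 0 else (cc m 0)%:R.

Lemma inv_fact n : fps_inv factorial_series n = Gbar n.
Proof.
apply: inv_unique => // {}n n0.
rewrite (sum_rev (fun i j => factorial_series i * Gbar j)) big_ord_recl /=.
rewrite subn0 /Gbar /= mulr1 /factorial_series (fact_rec n0) natr_sum.
apply/eqP; rewrite addrC addr_eq0 -sumrN; apply/eqP/eq_bigr => i _.
by rewrite /bump leq0n add1n mulrN natrM mulrC.
Qed.

Lemma fA_eq n : fA n = aa n.
Proof.
rewrite /fA /fps_sub inv_fact /fps_one /Gbar /aa.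
by case: (n == 0%N) => /=; rewrite ?subrr ?sub0r ?opprK.
Qed.


Fixpoint pw (k : nat) : fps rat :=
  match k with 0%N => fps_one rat | k'.+1 => fps_mul fA (pw k') end.

Lemma pw_claim k n : pw k.+1 n = if n == 0%N then 0 else (cc n k)%:R.
Proof.
elim: k n => [|k IH] n.
  by rewrite /= fps_mulr1 fA_eq.
have -> : pw k.+2 n = fps_mul fA (pw k.+1) n by [].
rewrite /fps_mul.
case: n => [|n]; first by rewrite big_ord1 fA_eq /aa /= mul0r.
rewrite [X in _ = X]/=.
rewrite /cc Gc_rec // natr_sum; apply: eq_bigr => j _.
rewrite fA_eq IH /aa.
case: eqP => [->|j0]; first by rewrite mul0r.
case: (ltnP j n.+1) => h.
  have -> : (n.+1 - j == 0)%N = false by rewrite subn_eq0 leqNgt h.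
  by rewrite natrM.
have -> : (n.+1 - j == 0)%N = true by rewrite subn_eq0 h.
by rewrite mulr0 mul0n.
Qed.

Lemma size_binv_seq (F : bfps) m : size (bfps_inv_seq F m) = m.+1.
Proof. by elim: m => //= m IH; rewrite size_rcons IH. Qed.

Lemma nth_binv_seq (F : bfps) m j : (j <= m)%N ->
  nth (fun _ => 0) (bfps_inv_seq F m) j = bfps_inv F j.
Proof.
rewrite /bfps_inv; elim: m => [|m IH]; first by rewrite leqn0 => /eqP ->.
rewrite leq_eqVlt => /orP [/eqP ->//|h].
by rewrite /= nth_rcons size_binv_seq h IH.
Qed.

Lemma inv_one n : fps_inv (fps_one rat) n = fps_one rat n.
Proof.
apply: inv_unique => // {}n n0; rewrite big1 // => i _.
rewrite /fps_one; case: (i =P 0%N :> nat) => [->|/eqP h].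
  by rewrite subn0; move: n0; rewrite lt0n => /negbTE ->; rewrite mulr0.
by rewrite mul0r.
Qed.

Lemma H_pw k n : bfps_inv one_minus_t_fA k n = pw k n.
Proof.
elim: k n => [|k IH] n.
  by rewrite /bfps_inv /= inv_one.
rewrite /bfps_inv /= nth_rcons size_binv_seq ltnn eqxx.
rewrite (@fps_mul_ext _ (fps_one rat) _ _ _ inv_one (fun _ => erefl)) fps_mul1.
rewrite big_ord_recl big1 ?addr0; last first.
  by move=> i _; rewrite lift0 /= fps_mul0.
rewrite /= subn0 nth_binv_seq // /fps_mul -sumrN; apply: eq_bigr => i _.
by rewrite /one_minus_t_fA /= /fps_sub IH sub0r mulNr opprK.
Qed.

Lemma gen_pw k n : gen_fun k n = pw k.+1 n.
Proof.
rewrite /gen_fun /bfps_mul big_ord_recl big1 ?addr0; last first.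
  by move=> i _; rewrite lift0 /bconst /= fps_mul0.
rewrite subn0 /bconst /=; apply: eq_bigr => i _; by rewrite H_pw.
Qed.

Lemma pw_claimS k n : pw k.+1 n.+1 = (cc n.+1 k)%:R.
Proof. by rewrite pw_claim. Qed.

Theorem mainTheorem14 (n k : nat) (hn : (1 <= n)%N) :
  (#|[set w : 'S_n | #|Cset w| == k]|)%:R = gen_fun k n :> rat.
Proof.
rewrite gen_pw.
case: n hn => [//|n] _.
rewrite pw_claimS /cc /Gc.
reflexivity.
Qed.
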